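(* Let $Q$ be a CQ query and $\Sigma$ a finite regularized set of embedded dependencies such that the set-chase result $(Q)_{\Sigma,S}$ exists. Then $(Q)_{\Sigma,S}\sqsubseteq_S(Q)_{\Sigma,BS}\sqsubseteq_S(Q)_{\Sigma,B}\sqsubseteq_S Q$.
   Context: A CQ query is $Q(\bar X):-p_1(\bar X_1),\dots,p_n(\bar X_n)$. $Q_1\sqsubseteq_S Q_2$ (set containment) means $Q_1(D,S)\subseteq Q_2(D,S)$ for every set-valued instance $D$, where $Q(D,S)$ is the set of $\gamma(\bar X)$ over assignments $\gamma$ with each $\gamma(\bar X_i)$ in the relation of $p_i$. Bag-set semantics: one copy of $\gamma(\bar X)$ per satisfying assignment, on set-valued instances; bag semantics: each satisfying $\gamma$ contributes the product of the multiplicities of the matched tuples, on bag-valued instances. Embedded dependencies: tgds $\phi(\bar U,\bar W)\to\exists\bar V\psi(\bar U,\bar V)$, egds $\phi(\bar U)\to U_1=U_2$; tgd chase step via homomorphism $h:\phi\to$ body not extendable to $\phi\wedge\psi$, adding $\psi(h(\bar U),\bar V)$ with fresh $\bar V$; egd step via $h$ with $h(U_1)\ne h(U_2)$, $h(U_1)$ a variable, replacing $h(U_1)$ by $h(U_2)$. $(Q)_{\Sigma,S}$ is the final query of a set-chase sequence whose canonical database (variables replaced by distinct constants) satisfies $\Sigma$. Regularized: no tgd's right-hand-side atoms split into two nonempty parts sharing only universally quantified variables. A chase step is sound under bag (resp. bag-set) semantics if it preserves answers under that semantics on all instances of the respective kind satisfying $\Sigma$ (under bag semantics removal of duplicate subgoals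 over relations required set valued is also permitted); $(Q)_{\Sigma,B}$ (resp. $(Q)_{\Sigma,BS}$) is the last query of a chase sequence from $Q$ with all steps sound under that semantics, to which no further sound step applies. *)

(* Defs.v *)
From Stdlib Require Import Bool List Arith PeanoNat Relations Permutation.
Import ListNotations.

Inductive term : Type := TVar (x : nat) | TCst (c : nat).

Record atom : Type := mkAtom { apred : nat; aargs : list term }.

(* a CQ  Q(head) :- body ; the body is a list (duplicate subgoals matter
   under bag semantics) *)
Record query : Type := mkQuery { qhead : list term; qbody : list atom }.

Definition tvars (t : term) : list nat :=
  match t with TVar x => [x] | TCst _ => [] end.
Definition avars (a : atom) : list nat := flat_map tvars (aargs a).
Definition bvars (b : list atom) : list nat := flat_map avars b.
Definition qvars (Q : query) : list nat :=
  nodup Nat.eq_dec (flat_map tvars (qhead Q) ++ bvars (qbody Q)).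
Definition tconsts (t : term) : list nat :=
  match t with TVar _ => [] | TCst c => [c] end.
Definition qconsts (Q : query) : list nat :=
  flat_map tconsts (qhead Q) ++ flat_map (fun a => flat_map tconsts (aargs a)) (qbody Q).

Definition safe (Q : query) : Prop :=
  forall x, In x (flat_map tvars (qhead Q)) -> In x (bvars (qbody Q)).

Record datom : Type := mkDAtom { dpred : nat; dargs : list nat }.
Definition dvars (l : list datom) : list nat := flat_map dargs l.

(* tgd  phi -> exists V, psi   (universal vars = vars of phi,
                                existential vars = vars of psi not in phi)
   egd  phi -> U1 = U2 *)
Inductive dependency : Type :=
| TGD (phi psi : list datom)
| EGD (phi : list datom) (u1 u2 : nat).

Definition wf_dep (d : dependency) : Prop :=
  match d with
  | TGD _ _ => True
  | EGD phi u1 u2 => In u1 (dvars phi) /\ In u2 (dvars phi)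
  end.

Definition regularized (Sigma : list dependency) : Prop :=
  forall phi psi, In (TGD phi psi) Sigma ->
    ~ exists psi1 psi2,
        Permutation (psi1 ++ psi2) psi /\ psi1 <> [] /\ psi2 <> [] /\
        (forall x, In x (dvars psi1) -> In x (dvars psi2) -> In x (dvars phi)).

Definition fact : Type := (nat * list nat)%type.
Definition fact_eq_dec : forall f g : fact, {f = g} + {f <> g}.
Proof. decide equality; [apply list_eq_dec, Nat.eq_dec | apply Nat.eq_dec]. Defined.

(* An instance is a finite list of facts.  As a set-valued instance, only
   membership matters; as a bag-valued instance, the multiplicity of a fact is
   its number of occurrences. *)
Definition instance : Type := list fact.

Definition eval (g : nat -> nat) (t : term) : nat :=
  match t with TVar x => g x | TCst c => c end.
Definition ifact (g : nat -> nat) (a : atom) : fact := (apred a, map (eval g) (aargs a)).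
Definition dfact (g : nat -> nat) (a : datom) : fact := (dpred a, map g (dargs a)).

Definition ans_set (Q : query) (D : instance) (t : list nat) : Prop :=
  exists g : nat -> nat, map (eval g) (qhead Q) = t /\
    forall a, In a (qbody Q) -> In (ifact g a) D.

Definition set_contained (Q1 Q2 : query) : Prop :=
  forall (D : instance) (t : list nat), ans_set Q1 D t -> ans_set Q2 D t.

Fixpoint tuples (cands : list nat) (n : nat) : list (list nat) :=
  match n with
  | 0 => [[]]
  | S n' => flat_map (fun c => map (cons c) (tuples cands n')) cands
  end.
Fixpoint assoc (vs l : list nat) (v : nat) : nat :=
  match vs, l with
  | x :: vs', c :: l' => if Nat.eqb x v then c else assoc vs' l' v
  | _, _ => 0
  end.
Definition adom (D : instance) : list nat := flat_map snd D.

(* Every assignment gamma of the variables of Q with gamma(head) = t and with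
   body satisfied takes values in adom(D) (body variables) or in t (head
   variables); so summing over all maps vars(Q) -> nodup(adom D ++ t) sums over
   exactly the relevant assignments, each once. *)
Definition assignments (Q : query) (D : instance) (t : list nat) : list (nat -> nat) :=
  map (assoc (qvars Q))
      (tuples (nodup Nat.eq_dec (adom D ++ t)) (length (qvars Q))).

Definition head_ok (Q : query) (g : nat -> nat) (t : list nat) : bool :=
  if list_eq_dec Nat.eq_dec (map (eval g) (qhead Q)) t then true else false.

Definition mult_bag (Q : query) (D : instance) (t : list nat) : nat :=
  list_sum (map (fun g => if head_ok Q g t then
        fold_right Nat.mul 1 (map (fun a => count_occ fact_eq_dec D (ifact g a)) (qbody Q))
      else 0) (assignments Q D t)).

Definition mult_bagset (Q : query) (D : instance) (t : list nat) : nat :=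
  list_sum (map (fun g => if head_ok Q g t &&
        forallb (fun a => if in_dec fact_eq_dec (ifact g a) D then true else false) (qbody Q)
      then 1 else 0) (assignments Q D t)).

Definition satisfies (D : instance) (d : dependency) : Prop :=
  match d with
  | TGD phi psi => forall h : nat -> nat,
      (forall a, In a phi -> In (dfact h a) D) ->
      exists h', (forall x, In x (dvars phi) -> h' x = h x) /\
                 (forall a, In a psi -> In (dfact h' a) D)
  | EGD phi u1 u2 => forall h : nat -> nat,
      (forall a, In a phi -> In (dfact h a) D) -> h u1 = h u2
  end.
Definition satisfies_all (D : instance) (Sigma : list dependency) : Prop :=
  forall d, In d Sigma -> satisfies D d.

(* bag-valued instances: relations listed as required set valued (SR p = true)
   have all multiplicities <= 1 *)
Definition bag_ok (SR : nat -> bool) (D : instance) : Prop :=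
  forall f : fact, SR (fst f) = true -> count_occ fact_eq_dec D f <= 1.

(* canonical database: variables replaced by distinct constants that are also
   distinct from the constants of Q *)
Definition freeze (Q : query) (x : nat) : nat := S (list_max (qconsts Q) + x).
Definition canon (Q : query) : instance := map (ifact (freeze Q)) (qbody Q).

Definition sterm (s : nat -> term) (t : term) : term :=
  match t with TVar x => s x | TCst c => TCst c end.
Definition satom (s : nat -> term) (a : atom) : atom := mkAtom (apred a) (map (sterm s) (aargs a)).
Definition squery (s : nat -> term) (Q : query) : query :=
  mkQuery (map (sterm s) (qhead Q)) (map (satom s) (qbody Q)).
Definition dinst (h : nat -> term) (a : datom) : atom := mkAtom (dpred a) (map h (dargs a)).

Definition dhom (h : nat -> term) (phi : list datom) (B : list atom) : Prop :=
  forall a, In a phi -> In (dinst h a) B.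

Definition repl (x : nat) (u : term) : nat -> term :=
  fun y => if Nat.eqb y x then u else TVar y.

Definition chase_step (d : dependency) (Q Q' : query) : Prop :=
  match d with
  | TGD phi psi =>
      exists h : nat -> term, dhom h phi (qbody Q) /\
        (~ exists h', (forall x, In x (dvars phi) -> h' x = h x) /\
                      dhom h' (phi ++ psi) (qbody Q)) /\
        exists g : nat -> term,
          (forall x, In x (dvars phi) -> g x = h x) /\
          (forall x, In x (dvars psi) -> ~ In x (dvars phi) ->
                     exists y, g x = TVar y /\ ~ In y (qvars Q)) /\
          (forall x y, In x (dvars psi) -> ~ In x (dvars phi) ->
                       In y (dvars psi) -> ~ In y (dvars phi) -> g x = g y -> x = y) /\
          Q' = mkQuery (qhead Q) (qbody Q ++ map (dinst g) psi)
  | EGD phi u1 u2 =>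
      exists h : nat -> term, dhom h phi (qbody Q) /\ h u1 <> h u2 /\
        ((exists x, h u1 = TVar x /\ Q' = squery (repl x (h u2)) Q) \/
         (exists x, h u2 = TVar x /\ Q' = squery (repl x (h u1)) Q))
  end.

Definition sigma_step (Sigma : list dependency) (Q Q' : query) : Prop :=
  exists d, In d Sigma /\ chase_step d Q Q'.

Definition dup_removal (SR : nat -> bool) (Q Q' : query) : Prop :=
  exists l1 a l2, qbody Q = l1 ++ a :: l2 /\ In a (l1 ++ l2) /\
    SR (apred a) = true /\ Q' = mkQuery (qhead Q) (l1 ++ l2).

Definition set_chase_result (Sigma : list dependency) (Q QS : query) : Prop :=
  clos_refl_trans query (sigma_step Sigma) Q QS /\ satisfies_all (canon QS) Sigma.

Definition bs_sound_step (Sigma : list dependency) (Q Q' : query) : Prop :=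
  sigma_step Sigma Q Q' /\
  forall D : instance, satisfies_all D Sigma ->
    forall t, mult_bagset Q D t = mult_bagset Q' D t.

Definition b_sound_step (SR : nat -> bool) (Sigma : list dependency) (Q Q' : query) : Prop :=
  (sigma_step Sigma Q Q' \/ dup_removal SR Q Q') /\
  forall D : instance, bag_ok SR D -> satisfies_all D Sigma ->
    forall t, mult_bag Q D t = mult_bag Q' D t.

Definition bs_chase_result (Sigma : list dependency) (Q QBS : query) : Prop :=
  clos_refl_trans query (bs_sound_step Sigma) Q QBS /\
  ~ exists Q'', bs_sound_step Sigma QBS Q''.

Definition b_chase_result (SR : nat -> bool) (Sigma : list dependency) (Q QB : query) : Prop :=
  clos_refl_trans query (b_sound_step SR Sigma) Q QB /\
  ~ exists Q'', b_sound_step SR Sigma QB Q''.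

(* Main.v *)
Require Import Defs.
From Stdlib Require Import List.
From Stdlib Require Import Bool Arith PeanoNat Relations Lia Classical.
Import ListNotations.

Definition occ (Q : query) (t : term) : Prop :=
  In t (qhead Q) \/ exists a, In a (qbody Q) /\ In t (aargs a).

Lemma In_ftv v l : In v (flat_map tvars l) <-> In (TVar v) l.
Proof.
  rewrite in_flat_map; split.
  - intros [t [Ht Hv]]. destruct t; simpl in Hv; [destruct Hv as [->|[]]; auto| contradiction].
  - intros H. exists (TVar v). simpl; auto.
Qed.

Lemma In_bvars v B : In v (bvars B) <-> exists a, In a B /\ In (TVar v) (aargs a).
Proof.
  unfold bvars. rewrite in_flat_map. split; intros [a [H1 H2]]; exists a; split; auto;
  unfold avars in *; [rewrite <- In_ftv | rewrite In_ftv]; auto.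
Qed.

Lemma qvars_occ Q v : In v (qvars Q) <-> occ Q (TVar v).
Proof.
  unfold qvars, occ. rewrite nodup_In, in_app_iff, In_ftv, In_bvars. tauto.
Qed.

Definition hom (Q1 Q2 : query) : Prop :=
  exists th : nat -> term, map (sterm th) (qhead Q1) = qhead Q2 /\
    forall a, In a (qbody Q1) -> In (satom th a) (qbody Q2).

Lemma hom_occ th Q1 Q2 t :
  map (sterm th) (qhead Q1) = qhead Q2 ->
  (forall a, In a (qbody Q1) -> In (satom th a) (qbody Q2)) ->
  occ Q1 t -> occ Q2 (sterm th t).
Proof.
  intros Hh Hb [H|[a [Ha Ht]]].
  - left. rewrite <- Hh. apply in_map; auto.
  - right. exists (satom th a). split; auto. simpl. apply in_map; auto.
Qed.

Definition eval_sterm g s t : eval g (sterm s t) = eval (fun v => eval g (s v)) t.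
Proof. destruct t; reflexivity. Qed.

Lemma map_eval_sterm g s l : map (eval g) (map (sterm s) l) = map (eval (fun v => eval g (s v))) l.
Proof. rewrite map_map. apply map_ext. apply eval_sterm. Qed.

Lemma ifact_satom g s a : ifact g (satom s a) = ifact (fun v => eval g (s v)) a.
Proof. unfold ifact, satom; simpl. f_equal. apply map_eval_sterm. Qed.

Lemma ifact_dinst g h a : ifact g (dinst h a) = dfact (fun v => eval g (h v)) a.
Proof. unfold ifact, dinst, dfact; simpl. rewrite map_map. reflexivity. Qed.

Lemma sterm_sterm s1 s2 t : sterm s2 (sterm s1 t) = sterm (fun v => sterm s2 (s1 v)) t.
Proof. destruct t; reflexivity. Qed.

Lemma satom_satom s1 s2 a : satom s2 (satom s1 a) = satom (fun v => sterm s2 (s1 v)) a.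
Proof. unfold satom; simpl. f_equal. rewrite map_map. apply map_ext, sterm_sterm. Qed.

Lemma satom_dinst s h a : satom s (dinst h a) = dinst (fun v => sterm s (h v)) a.
Proof. unfold satom, dinst; simpl. f_equal. rewrite map_map. reflexivity. Qed.

Lemma sterm_id t : sterm TVar t = t. Proof. destruct t; reflexivity. Qed.
Lemma satom_id a : satom TVar a = a.
Proof. destruct a as [p l]; unfold satom; simpl. f_equal. rewrite <- (map_id l) at 2. apply map_ext, sterm_id. Qed.

Lemma hom_refl Q : hom Q Q.
Proof.
  exists TVar. split.
  - rewrite <- (map_id (qhead Q)) at 2. apply map_ext, sterm_id.
  - intros a Ha. rewrite satom_id; auto.
Qed.

Lemma hom_trans Q1 Q2 Q3 : hom Q1 Q2 -> hom Q2 Q3 -> hom Q1 Q3.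
Proof.
  intros [t1 [H1 B1]] [t2 [H2 B2]]. exists (fun v => sterm t2 (t1 v)). split.
  - rewrite <- H2, <- H1, map_map. apply map_ext. intros; symmetry; apply sterm_sterm.
  - intros a Ha. rewrite <- satom_satom. auto.
Qed.

Lemma hom_contained Q1 Q2 : hom Q1 Q2 -> set_contained Q2 Q1.
Proof.
  intros [th [Hh Hb]] D t [g [Hg Ha]].
  exists (fun v => eval g (th v)). split.
  - rewrite <- Hg, <- Hh, map_eval_sterm. reflexivity.
  - intros a Hin. rewrite <- ifact_satom. auto.
Qed.

Lemma squery_hom s Q : hom Q (squery s Q).
Proof. exists s. split; auto. intros a Ha. simpl. apply in_map; auto. Qed.

Lemma chase_step_hom d Q Q' : chase_step d Q Q' -> hom Q Q'.
Proof.
  destruct d; simpl.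
  - intros [h [_ [_ [g [_ [_ [_ ->]]]]]]]. exists TVar. split.
    + simpl. rewrite <- (map_id (qhead Q)) at 2. apply map_ext, sterm_id.
    + intros a Ha. rewrite satom_id. simpl. apply in_or_app; auto.
  - intros [h [_ [_ [[x [_ ->]]|[x [_ ->]]]]]]; apply squery_hom.
Qed.

Lemma sigma_step_hom S Q Q' : sigma_step S Q Q' -> hom Q Q'.
Proof. intros [d [_ H]]. eapply chase_step_hom; eauto. Qed.

Lemma dup_removal_hom SR Q Q' : dup_removal SR Q Q' -> hom Q Q'.
Proof.
  intros [l1 [a [l2 [Hb [Hin [_ ->]]]]]]. exists TVar. split.
  - simpl. rewrite <- (map_id (qhead Q)) at 2. apply map_ext, sterm_id.
  - intros b Hb'. rewrite satom_id. simpl. rewrite Hb in Hb'.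
    apply in_app_or in Hb'. destruct Hb' as [H|[<-|H]]; auto; apply in_or_app; auto.
    
Qed.

Lemma rt_hom (R : query -> query -> Prop) Q Q' :
  (forall A B, R A B -> hom A B) -> clos_refl_trans query R Q Q' -> hom Q Q'.
Proof.
  intros HR H. induction H. apply HR; auto. apply hom_refl. eapply hom_trans; eauto.
Qed.

Definition sat (Q : query) (D : instance) (t : list nat) (g : nat -> nat) : Prop :=
  map (eval g) (qhead Q) = t /\ forall a, In a (qbody Q) -> In (ifact g a) D.

Definition agree (l : list nat) (g g' : nat -> nat) : Prop := forall x, In x l -> g x = g' x.

Lemma eval_ext g g' t : (forall x, In x (tvars t) -> g x = g' x) -> eval g t = eval g' t.
Proof. destruct t; simpl; auto. Qed.

Lemma eval_occ Q g g' t : agree (qvars Q) g g' -> occ Q t -> eval g t = eval g' t.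
Proof.
  intros H Ho. apply eval_ext. intros x Hx. destruct t; simpl in Hx; [|contradiction].
  destruct Hx as [<-|[]]. apply H, qvars_occ; auto.
Qed.

Lemma sat_ext Q D t g g' : agree (qvars Q) g g' -> sat Q D t g -> sat Q D t g'.
Proof.
  intros H [Hh Hb]. split.
  - rewrite <- Hh. apply map_ext_in. intros u Hu. symmetry. apply (eval_occ Q); auto. left; auto.
  - intros a Ha. replace (ifact g' a) with (ifact g a); auto. unfold ifact. f_equal.
    apply map_ext_in. intros u Hu. apply (eval_occ Q); auto. right; eauto.
Qed.

Lemma sat_vals Q D t g x : sat Q D t g -> In x (qvars Q) -> In (g x) (adom D ++ t).
Proof.
  intros [Hh Hb] Hx. apply qvars_occ in Hx. destruct Hx as [H|[a [Ha Ht]]]; apply in_or_app.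
  - right. rewrite <- Hh. change (g x) with (eval g (TVar x)). apply in_map; auto.
  - left. unfold adom. apply in_flat_map. exists (ifact g a). split; auto.
    simpl. change (g x) with (eval g (TVar x)). apply in_map; auto.
Qed.

Lemma tuples_In C n tau : In tau (tuples C n) <-> length tau = n /\ incl tau C.
Proof.
  revert tau; induction n; intros tau; simpl.
  - split. intros [<-|[]]; split; auto; intros x []. intros [H0 _]; destruct tau; [auto|discriminate].
  - rewrite in_flat_map. split.
    + intros [c [Hc Hm]]. apply in_map_iff in Hm. destruct Hm as [tl [<- Htl]].
      apply IHn in Htl. destruct Htl as [Hl Hi]. split; simpl; auto. intros y [<-|Hy]; auto.
    + intros [Hl Hi]. destruct tau as [|c tl]; [discriminate|]. exists c. split. apply Hi; left; auto.
      apply in_map. apply IHn. split; auto. intros y Hy; apply Hi; right; auto.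
Qed.

Lemma fm_NoDup (C : list nat) (T : list (list nat)) : NoDup C -> NoDup T ->
  NoDup (flat_map (fun c => map (cons c) T) C).
Proof.
  intros HC HT. induction HC; simpl. constructor. apply NoDup_app; auto.
  - apply FinFun.Injective_map_NoDup; auto. intros a b Hab; injection Hab; auto.
  - intros y Hy1 Hy2. apply in_map_iff in Hy1. destruct Hy1 as [u [<- _]].
    apply in_flat_map in Hy2. destruct Hy2 as [c [Hc Hm]]. apply in_map_iff in Hm.
    destruct Hm as [w [Hw _]]. injection Hw; intros; subst. contradiction.
Qed.

Lemma tuples_NoDup C n : NoDup C -> NoDup (tuples C n).
Proof.
  intros HC. induction n; simpl. constructor; auto; constructor. apply fm_NoDup; auto.
Qed.

Lemma assoc_map vs g x : NoDup vs -> In x vs -> assoc vs (map g vs) x = g x.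
Proof.
  induction 1; simpl. intros []. intros [<-|Hx].
  - rewrite Nat.eqb_refl; auto.
  - destruct (Nat.eqb_spec x0 x); subst; auto.
Qed.

Lemma map_assoc vs tau : NoDup vs -> length tau = length vs -> map (assoc vs tau) vs = tau.
Proof.
  intros H; revert tau; induction H; intros tau Hl; destruct tau; simpl in *; try discriminate; auto.
  rewrite Nat.eqb_refl. f_equal. transitivity (map (assoc l tau) l); [|apply IHNoDup; lia]. apply map_ext_in.
  intros y Hy. destruct (Nat.eqb_spec x y); subst; auto. contradiction.
Qed.

Lemma map_eq_agree vs g g' : map g vs = map g' vs -> agree vs g g'.
Proof. induction vs; simpl; intros H x Hx; [contradiction|]. injection H; intros.
  destruct Hx as [<-|Hx]; auto. apply IHvs; auto. Qed.

Definition satb (Q : query) (D : instance) (t : list nat) (g : nat -> nat) : bool :=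
  head_ok Q g t &&
  forallb (fun a => if in_dec fact_eq_dec (ifact g a) D then true else false) (qbody Q).

Lemma satb_sat Q D t g : satb Q D t g = true <-> sat Q D t g.
Proof.
  unfold satb, sat, head_ok. rewrite andb_true_iff, forallb_forall.
  destruct (list_eq_dec Nat.eq_dec (map (eval g) (qhead Q)) t).
  - split; intros [_ H]; split; auto; intros a Ha; specialize (H a Ha);
    destruct (in_dec fact_eq_dec (ifact g a) D); auto; discriminate.
  - split; intros [H _]; [discriminate|contradiction].
Qed.

Definition cands (Q : query) (D : instance) (t : list nat) := nodup Nat.eq_dec (adom D ++ t).
Definition SatL Q D t := filter (fun tau => satb Q D t (assoc (qvars Q) tau))
   (tuples (cands Q D t) (length (qvars Q))).

Lemma sum01 {A} (b : A -> bool) l : list_sum (map (fun x => if b x then 1 else 0) l) = length (filter b l).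
Proof. induction l; simpl; auto. destruct (b a); simpl; auto. Qed.

Lemma mult_bagset_SatL Q D t : mult_bagset Q D t = length (SatL Q D t).
Proof.
  unfold mult_bagset, assignments, SatL. rewrite map_map. apply (sum01 (fun tau => satb Q D t (assoc (qvars Q) tau))).
Qed.

Lemma SatL_NoDup Q D t : NoDup (SatL Q D t).
Proof. apply NoDup_filter, tuples_NoDup, NoDup_nodup. Qed.

Lemma SatL_In Q D t tau : In tau (SatL Q D t) <-> length tau = length (qvars Q) /\ sat Q D t (assoc (qvars Q) tau).
Proof.
  unfold SatL. rewrite filter_In, tuples_In, satb_sat. split; [tauto|].
  intros [Hl Hs]. split; [split|exact Hs]; auto. intros c Hc.
  rewrite <- (map_assoc (qvars Q) tau) in Hc by (auto; apply NoDup_nodup).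
  apply in_map_iff in Hc. destruct Hc as [x [<- Hx]]. unfold cands. apply nodup_In.
  eapply sat_vals; eauto.
Qed.

Lemma SatL_of Q D t g : sat Q D t g -> In (map g (qvars Q)) (SatL Q D t).
Proof.
  intros H. apply SatL_In. split. apply length_map. eapply sat_ext; eauto.
  intros x Hx. symmetry. apply assoc_map; auto. apply NoDup_nodup.
Qed.

Lemma rel_len {A B} (decB : forall x y : B, {x = y} + {x <> y}) (R : A -> B -> Prop) l1 l2 :
  NoDup l1 -> (forall a, In a l1 -> exists b, In b l2 /\ R a b) ->
  (forall a a' b, In a l1 -> In a' l1 -> R a b -> R a' b -> a = a') -> length l1 <= length l2.
Proof.
  intros H; revert l2; induction H as [|a l1 Hn Hd IH]; intros l2 Hex Hinj; simpl. lia.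
  destruct (Hex a (or_introl eq_refl)) as [b [Hb Rb]].
  assert (length l1 <= length (remove decB b l2)).
  { apply IH.
    - intros a' Ha'. destruct (Hex a' (or_intror Ha')) as [b' [Hb' Rb']]. exists b'. split; auto.
      apply in_in_remove; auto. intros ->. apply Hn. replace a with a'; auto. symmetry; apply (Hinj a a' b); simpl; auto.
    - intros; apply (Hinj a0 a' b0); simpl; auto. }
  pose proof (remove_length_lt decB l2 b Hb). lia.
Qed.

Definition rinv (l : list nat) (R : (nat -> nat) -> (nat -> nat) -> Prop) :=
  forall g g' g'', agree l g' g'' -> R g g' -> R g g''.

Lemma count_gen Q D t Q' D' t' (R : (nat -> nat) -> (nat -> nat) -> Prop) (excl : option (nat -> nat)) :
  rinv (qvars Q') R ->
  (forall g, sat Q D t g -> exists g', sat Q' D' t' g' /\ R g g' /\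
      match excl with Some gb => ~ agree (qvars Q') g' gb | None => True end) ->
  (forall g1 g2 g', sat Q D t g1 -> sat Q D t g2 -> sat Q' D' t' g' -> R g1 g' -> R g2 g' -> agree (qvars Q) g1 g2) ->
  match excl with Some gb => sat Q' D' t' gb | None => True end ->
  length (SatL Q D t) + (match excl with Some _ => 1 | None => 0 end) <= length (SatL Q' D' t').
Proof.
  intros Hr Hex Hinj Hgb.
  set (vs := qvars Q). set (vs' := qvars Q').
  set (Rt := fun tau tau' => In tau' (SatL Q' D' t') /\ R (assoc vs tau) (assoc vs' tau')).
  assert (ND : NoDup vs) by apply NoDup_nodup. assert (ND' : NoDup vs') by apply NoDup_nodup.
  assert (Hinjt : forall a a' b, In a (SatL Q D t) -> In a' (SatL Q D t) -> Rt a b -> Rt a' b -> a = a').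
  { intros a a' b Ha Ha' [Hb1 Hb2] [_ Hb3]. apply SatL_In in Ha, Ha', Hb1.
    rewrite <- (map_assoc vs a) by (tauto). rewrite <- (map_assoc vs a') by tauto.
    apply map_ext_in. apply (Hinj _ _ (assoc vs' b)); tauto. }
  assert (Hext : forall a, In a (SatL Q D t) -> exists g', sat Q' D' t' g' /\ Rt a (map g' vs') /\
      match excl with Some gb => ~ agree vs' g' gb | None => True end).
  { intros a Ha. apply SatL_In in Ha. destruct Ha as [_ Hs]. destruct (Hex _ Hs) as [g' [Hs' [HR He]]].
    exists g'. split; auto. split; auto. split. apply SatL_of; auto.
    apply (Hr _ g'); auto. intros x Hx. symmetry. apply assoc_map; auto. }
  destruct excl as [gb|].
  - set (tb := map gb vs').
    assert (Htb : In tb (SatL Q' D' t')) by (apply SatL_of; auto).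
    assert (length (SatL Q D t) <= length (remove (list_eq_dec Nat.eq_dec) tb (SatL Q' D' t'))).
    { apply (rel_len (list_eq_dec Nat.eq_dec) Rt). apply SatL_NoDup.
      - intros a Ha. destruct (Hext a Ha) as [g' [Hs' [HR He]]]. exists (map g' vs'). split; auto.
        apply in_in_remove. intros Heq. apply He. apply map_eq_agree; auto. apply SatL_of; auto.
      - intros a a' b Ha Ha' Hb Hb'. apply (Hinjt a a' b); auto. }
    pose proof (remove_length_lt (list_eq_dec Nat.eq_dec) _ _ Htb). lia.
  - rewrite Nat.add_0_r. apply (rel_len (list_eq_dec Nat.eq_dec) Rt). apply SatL_NoDup.
    + intros a Ha. destruct (Hext a Ha) as [g' [Hs' [HR He]]]. exists (map g' vs'). split; auto.
      apply SatL_of; auto.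
    + auto.
Qed.

Lemma count_le Q D t Q' D' t' (R : (nat -> nat) -> (nat -> nat) -> Prop) :
  rinv (qvars Q') R ->
  (forall g, sat Q D t g -> exists g', sat Q' D' t' g' /\ R g g') ->
  (forall g1 g2 g', sat Q D t g1 -> sat Q D t g2 -> sat Q' D' t' g' -> R g1 g' -> R g2 g' -> agree (qvars Q) g1 g2) ->
  mult_bagset Q D t <= mult_bagset Q' D' t'.
Proof.
  intros Hr Hex Hinj. rewrite !mult_bagset_SatL.
  pose proof (count_gen Q D t Q' D' t' R None Hr) as H. simpl in H. rewrite Nat.add_0_r in H.
  apply H; auto. intros g Hg. destruct (Hex g Hg) as [g' [? ?]]; eauto.
Qed.

Lemma count_lt Q D t Q' D' t' (R : (nat -> nat) -> (nat -> nat) -> Prop) gb :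
  rinv (qvars Q') R -> sat Q' D' t' gb ->
  (forall g, sat Q D t g -> exists g', sat Q' D' t' g' /\ R g g' /\ ~ agree (qvars Q') g' gb) ->
  (forall g1 g2 g', sat Q D t g1 -> sat Q D t g2 -> sat Q' D' t' g' -> R g1 g' -> R g2 g' -> agree (qvars Q) g1 g2) ->
  length (SatL Q D t) < length (SatL Q' D' t').
Proof.
  intros Hr Hb Hex Hinj.
  pose proof (count_gen Q D t Q' D' t' R (Some gb) Hr Hex Hinj Hb). simpl in H. lia.
Qed.

Definition term_eq_dec (a b : term) : {a = b} + {a <> b}.
Proof. decide equality; apply Nat.eq_dec. Defined.

Definition tgd_data (Q1 : query) phi psi (h g : nat -> term) : Prop :=
  dhom h phi (qbody Q1) /\
  (forall x, In x (dvars phi) -> g x = h x) /\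
  (forall x, In x (dvars psi) -> ~ In x (dvars phi) -> exists y, g x = TVar y /\ ~ In y (qvars Q1)) /\
  (forall x y, In x (dvars psi) -> ~ In x (dvars phi) ->
      In y (dvars psi) -> ~ In y (dvars phi) -> g x = g y -> x = y).

Definition tgd_res (Q1 : query) psi (g : nat -> term) : query :=
  mkQuery (qhead Q1) (qbody Q1 ++ map (dinst g) psi).

Definition invg phi psi (g : nat -> term) (y : nat) : option nat :=
  find (fun x => (if in_dec Nat.eq_dec x (dvars phi) then false else true) &&
                 (if term_eq_dec (g x) (TVar y) then true else false)) (dvars psi).

Lemma invg_some phi psi g y x : invg phi psi g y = Some x ->
  In x (dvars psi) /\ ~ In x (dvars phi) /\ g x = TVar y.
Proof.
  unfold invg. intros H. apply find_some in H. destruct H as [H1 H2].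
  apply andb_true_iff in H2. destruct H2 as [H2 H3].
  destruct (in_dec Nat.eq_dec x (dvars phi)); [discriminate|].
  destruct (term_eq_dec (g x) (TVar y)); [|discriminate]. auto.
Qed.

Lemma invg_ex Q1 phi psi h g x y : tgd_data Q1 phi psi h g ->
  In x (dvars psi) -> ~ In x (dvars phi) -> g x = TVar y -> invg phi psi g y = Some x.
Proof.
  intros [_ [_ [_ Hi]]] H1 H2 H3. destruct (invg phi psi g y) as [x'|] eqn:E.
  - apply invg_some in E. destruct E as [E1 [E2 E3]]. f_equal. apply Hi; auto. congruence.
  - exfalso. unfold invg in E. pose proof (find_none _ _ E x H1) as F. simpl in F.
    destruct (in_dec Nat.eq_dec x (dvars phi)); [contradiction|].
    destruct (term_eq_dec (g x) (TVar y)); [discriminate|contradiction].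
Qed.

Lemma invg_old Q1 phi psi h g y : tgd_data Q1 phi psi h g -> In y (qvars Q1) -> invg phi psi g y = None.
Proof.
  intros Hd Hy. destruct (invg phi psi g y) as [x|] eqn:E; auto.
  apply invg_some in E. destruct E as [E1 [E2 E3]]. destruct Hd as [_ [_ [Hf _]]].
  destruct (Hf x E1 E2) as [y' [Hy' Hn]]. rewrite E3 in Hy'. injection Hy'; intros ->. contradiction.
Qed.

Lemma dhom_occ h phi Q v : dhom h phi (qbody Q) -> In v (dvars phi) -> occ Q (h v).
Proof.
  intros Hd Hv. unfold dvars in Hv. apply in_flat_map in Hv. destruct Hv as [a [Ha Hv]].
  right. exists (dinst h a). split; auto. simpl. apply in_map; auto.
Qed.

Lemma occ_vars Q t v : occ Q t -> In v (tvars t) -> In v (qvars Q).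
Proof. intros H Hv. destruct t; simpl in Hv; [|contradiction]. destruct Hv as [<-|[]]. apply qvars_occ; auto. Qed.

Lemma tgd_res_occ Q1 psi g t : occ (tgd_res Q1 psi g) t <->
  occ Q1 t \/ exists v, In v (dvars psi) /\ g v = t.
Proof.
  unfold occ, tgd_res; simpl. split.
  - intros [H|[a [Ha Ht]]]; auto. apply in_app_or in Ha. destruct Ha as [Ha|Ha]; eauto.
    apply in_map_iff in Ha. destruct Ha as [b [<- Hb]]. simpl in Ht. apply in_map_iff in Ht.
    destruct Ht as [v [<- Hv]]. right. exists v. split; auto. unfold dvars. apply in_flat_map; eauto.
  - intros [[H|[a [Ha Ht]]]|[v [Hv <-]]]; auto.
    + right. exists a. split; auto. apply in_or_app; auto.
    + unfold dvars in Hv. apply in_flat_map in Hv. destruct Hv as [b [Hb Hv]].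
      right. exists (dinst g b). split. apply in_or_app; right; apply in_map; auto.
      simpl. apply in_map; auto.
Qed.

Lemma tgd_vars_old Q1 psi g v : In v (qvars Q1) -> In v (qvars (tgd_res Q1 psi g)).
Proof. rewrite !qvars_occ, tgd_res_occ. auto. Qed.

Lemma tgd_vars_new Q1 phi psi h g v : tgd_data Q1 phi psi h g -> In v (qvars (tgd_res Q1 psi g)) ->
  In v (qvars Q1) \/ exists x, In x (dvars psi) /\ ~ In x (dvars phi) /\ g x = TVar v.
Proof.
  intros Hd. rewrite !qvars_occ, tgd_res_occ. intros [H|[x [Hx Hg]]]; auto.
  destruct (in_dec Nat.eq_dec x (dvars phi)) as [Hp|Hp]; eauto.
  left. destruct Hd as [Hh [H1 _]]. rewrite H1 in Hg by auto. rewrite <- Hg. apply dhom_occ with phi; auto.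
Qed.

Lemma tgd_vars_ex Q1 psi g x y : In x (dvars psi) -> g x = TVar y -> In y (qvars (tgd_res Q1 psi g)).
Proof. intros H1 H2. apply qvars_occ, tgd_res_occ. right. eauto. Qed.

Lemma restr_sat Q1 psi g D t d : sat (tgd_res Q1 psi g) D t d -> sat Q1 D t d.
Proof. intros [H1 H2]. split; auto. intros a Ha. apply H2. simpl. apply in_or_app; auto. Qed.

Lemma dargs_in v b psi : In b psi -> In v (dargs b) -> In v (dvars psi).
Proof. intros; unfold dvars; apply in_flat_map; eauto. Qed.

Lemma ext_sat Q1 phi psi h g D t d : tgd_data Q1 phi psi h g -> satisfies D (TGD phi psi) ->
  sat Q1 D t d -> exists d', sat (tgd_res Q1 psi g) D t d' /\ agree (qvars Q1) d d'.
Proof.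
  intros Hd HD Hs. pose proof Hd as [Hh [H1 [H2 H3]]].
  destruct (HD (fun v => eval d (h v))) as [h' [Ha Hb]].
  { intros a Ha. rewrite <- ifact_dinst. apply Hs. apply Hh; auto. }
  set (d' := fun y => match invg phi psi g y with Some x => h' x | None => d y end).
  assert (Hag : agree (qvars Q1) d d').
  { intros y Hy. unfold d'. rewrite (invg_old Q1 phi psi h g y); auto. }
  exists d'. split; auto. destruct Hs as [Hs1 Hs2]. split.
  - simpl. rewrite <- Hs1. apply map_ext_in. intros u Hu. symmetry. apply (eval_occ Q1); auto. left; auto.
  - simpl. intros a Hin. apply in_app_or in Hin. destruct Hin as [Ha0|Ha0].
    + replace (ifact d' a) with (ifact d a). auto. unfold ifact; f_equal. apply map_ext_in.
      intros u Hu. apply (eval_occ Q1); auto. right; eauto.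
    + apply in_map_iff in Ha0. destruct Ha0 as [b [<- Hb']]. rewrite ifact_dinst.
      replace (dfact (fun v => eval d' (g v)) b) with (dfact h' b); auto.
      unfold dfact; f_equal. apply map_ext_in. intros v Hv.
      assert (Hvp : In v (dvars psi)) by (eapply dargs_in; eauto).
      destruct (in_dec Nat.eq_dec v (dvars phi)) as [Hp|Hp].
      * rewrite Ha by auto. rewrite H1 by auto. symmetry. apply (eval_occ Q1). intros x Hx; symmetry; auto. apply dhom_occ with phi; auto.
      * destruct (H2 v Hvp Hp) as [y [Hy _]]. rewrite Hy. simpl. unfold d'.
        rewrite (invg_ex Q1 phi psi h g v y); auto.
Qed.

Lemma sound_of_uniq Q1 phi psi h g D t : tgd_data Q1 phi psi h g -> satisfies D (TGD phi psi) ->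
  (forall d1 d2, sat (tgd_res Q1 psi g) D t d1 -> sat (tgd_res Q1 psi g) D t d2 ->
     agree (qvars Q1) d1 d2 -> agree (qvars (tgd_res Q1 psi g)) d1 d2) ->
  mult_bagset Q1 D t = mult_bagset (tgd_res Q1 psi g) D t.
Proof.
  intros Hd HD U. apply Nat.le_antisymm.
  - apply (count_le _ _ _ _ _ _ (fun d d' => agree (qvars Q1) d d')).
    + intros a b c Hbc Hab x Hx. rewrite Hab by auto. apply Hbc. apply tgd_vars_old; auto.
    + intros d Hs. eapply ext_sat; eauto.
    + intros d1 d2 d' _ _ _ A1 A2 x Hx. rewrite A1, A2; auto.
  - apply (count_le _ _ _ _ _ _ (fun d' d => agree (qvars Q1) d' d)).
    + intros a b c Hbc Hab x Hx. rewrite Hab by auto. apply Hbc. auto.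
    + intros d Hs. exists d. split. eapply restr_sat; eauto. intros x _; auto.
    + intros d1 d2 d' S1 S2 _ A1 A2. apply U; auto. intros x Hx. rewrite A1, A2; auto.
Qed.

Lemma uniq_of_count Q1 phi psi h g D t : tgd_data Q1 phi psi h g -> satisfies D (TGD phi psi) ->
  length (SatL Q1 D t) = length (SatL (tgd_res Q1 psi g) D t) ->
  forall d1 d2, sat (tgd_res Q1 psi g) D t d1 -> sat (tgd_res Q1 psi g) D t d2 ->
     agree (qvars Q1) d1 d2 -> agree (qvars (tgd_res Q1 psi g)) d1 d2.
Proof.
  intros Hd HD Hc d1 d2 S1 S2 A12. apply NNPP. intro NA.
  assert (length (SatL Q1 D t) < length (SatL (tgd_res Q1 psi g) D t)); [|lia].
  apply (count_lt _ _ _ _ _ _ (fun d d' => agree (qvars Q1) d d') d2); auto.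
  - intros a b c Hbc Hab x Hx. rewrite Hab by auto. apply Hbc. apply tgd_vars_old; auto.
  - intros d Hs. destruct (classic (agree (qvars Q1) d d1)) as [Y|N].
    + exists d1. auto.
    + destruct (ext_sat Q1 phi psi h g D t d Hd HD Hs) as [d' [S' A']]. exists d'. split; auto. split; auto.
      intros A2. apply N. intros x Hx. rewrite A' by auto. rewrite A2 by (apply tgd_vars_old; auto).
      symmetry; auto.
  - intros a b c _ _ _ A1 A2 x Hx. rewrite A1, A2; auto.
Qed.

Lemma squery_occ s P t' : occ (squery s P) t' <-> exists t, occ P t /\ sterm s t = t'.
Proof.
  unfold occ, squery; simpl. split.
  - intros [H|[a [Ha Ht]]].
    + apply in_map_iff in H. destruct H as [t [<- Ht]]. eauto.
    + apply in_map_iff in Ha. destruct Ha as [b [<- Hb]]. simpl in Ht. apply in_map_iff in Ht.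
      destruct Ht as [t [<- Ht]]. exists t. split; eauto.
  - intros [t [[H|[a [Ha Ht]]] <-]].
    + left. apply in_map; auto.
    + right. exists (satom s a). split. apply in_map; auto. simpl. apply in_map; auto.
Qed.

Lemma sat_squery s P D t d : sat (squery s P) D t d <-> sat P D t (fun v => eval d (s v)).
Proof.
  unfold sat; simpl. rewrite map_eval_sterm. split; intros [H1 H2]; split; auto.
  - intros a Ha. rewrite <- ifact_satom. apply H2, in_map; auto.
  - intros a Ha. apply in_map_iff in Ha. destruct Ha as [b [<- Hb]]. rewrite ifact_satom. auto.
Qed.

Lemma egd_sound P x u D t : u <> TVar x -> In x (qvars P) -> (forall w, In w (tvars u) -> In w (qvars P)) ->
  (forall d, sat P D t d -> d x = eval d u) ->
  mult_bagset P D t = mult_bagset (squery (repl x u) P) D t.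
Proof.
  intros Hu Hx Hvu Heq. set (P' := squery (repl x u) P).
  assert (A : forall v, In v (qvars P) -> v <> x -> In v (qvars P')).
  { intros v Hv Hne. apply qvars_occ, squery_occ. exists (TVar v). split. apply qvars_occ; auto.
    simpl. unfold repl. destruct (Nat.eqb_spec v x); congruence. }
  assert (B : forall w, In w (tvars u) -> In w (qvars P')).
  { intros w Hw. destruct u as [y|c]; simpl in Hw; [|contradiction]. destruct Hw as [<-|[]].
    apply qvars_occ, squery_occ. exists (TVar x). split. apply qvars_occ; auto.
    simpl. unfold repl. rewrite Nat.eqb_refl. auto. }
  assert (C : forall v, In v (qvars P') -> (In v (qvars P) /\ v <> x) \/ u = TVar v).
  { intros v Hv. apply qvars_occ, squery_occ in Hv. destruct Hv as [[w|c] [Ho Hs]]; simpl in Hs; [|discriminate].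
    unfold repl in Hs. destruct (Nat.eqb_spec w x); auto. injection Hs; intros ->. left. split; auto. apply qvars_occ; auto. }
  apply Nat.le_antisymm.
  - apply (count_le _ _ _ _ _ _ (fun d d' => agree (qvars P') d d')).
    + intros a b c Hbc Hab y Hy. rewrite Hab by auto. auto.
    + intros d Hs. exists d. split; [|intros y _; auto]. apply sat_squery. eapply sat_ext; eauto.
      intros v _. unfold repl. destruct (Nat.eqb_spec v x); subst; simpl; auto.
    + intros d1 d2 d' S1 S2 _ A1 A2 v Hv. destruct (Nat.eq_dec v x) as [->|Hne].
      * rewrite (Heq d1), (Heq d2) by auto. transitivity (eval d' u). apply eval_ext; auto.
        symmetry. apply eval_ext; auto.
      * rewrite A1, A2; auto.
  - apply (count_le _ _ _ _ _ _ (fun d' d => forall v, In v (qvars P) -> d v = eval d' (repl x u v))).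
    + intros a b c Hbc Hab y Hy. rewrite <- Hbc by auto. auto.
    + intros d Hs. exists (fun v => eval d (repl x u v)). split; auto. apply sat_squery; auto.
    + intros d1 d2 d' S1 S2 _ R1 R2 v Hv. destruct (C v Hv) as [[Hv' Hne]|Hu'].
      * pose proof (R1 v Hv') as E1. pose proof (R2 v Hv') as E2. unfold repl in E1, E2.
        destruct (Nat.eqb_spec v x); [contradiction|]. simpl in *. congruence.
      * pose proof (R1 x Hx) as E1. pose proof (R2 x Hx) as E2. unfold repl in E1, E2.
        rewrite Nat.eqb_refl in E1, E2. rewrite Hu' in E1, E2. simpl in *. congruence.
Qed.

Definition MQ (Q : query) := list_max (qconsts Q).
Definition good (M : nat) (t : term) : Prop := match t with TCst c => c <= M | TVar _ => True end.
Definition unfz (M v : nat) : term := if v <=? M then TCst v else TVar (v - S M).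

Lemma unfz_eval Q t : good (MQ Q) t -> unfz (MQ Q) (eval (freeze Q) t) = t.
Proof.
  unfold unfz, MQ. destruct t as [x|c]; unfold eval; intros H; [unfold freeze|].
  - destruct (Nat.leb_spec (S (list_max (qconsts Q) + x)) (list_max (qconsts Q))); [lia|]. f_equal; lia.
  - destruct (Nat.leb_spec c (list_max (qconsts Q))); auto. simpl in H. lia.
Qed.

Lemma occ_good Q t : occ Q t -> good (MQ Q) t.
Proof.
  intros H. destruct t as [x|c]; simpl; auto. unfold MQ.
  assert (Hf : Forall (fun k => k <= list_max (qconsts Q)) (qconsts Q)) by (apply list_max_le; auto).
  rewrite Forall_forall in Hf. apply Hf. unfold qconsts. apply in_or_app.
  destruct H as [H|[a [Ha Ht]]].
  - left. apply in_flat_map. exists (TCst c). simpl; auto.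
  - right. apply in_flat_map. exists a. split; auto. apply in_flat_map. exists (TCst c). simpl; auto.
Qed.

Lemma freeze_inj Q t1 t2 : occ Q t1 -> occ Q t2 -> eval (freeze Q) t1 = eval (freeze Q) t2 -> t1 = t2.
Proof.
  intros H1 H2 E. rewrite <- (unfz_eval Q t1), <- (unfz_eval Q t2) by (apply occ_good; auto). congruence.
Qed.

Lemma canon_inv Q f : In f (canon Q) -> exists b, In b (qbody Q) /\ ifact (freeze Q) b = f.
Proof. unfold canon. intros H. apply in_map_iff in H. destruct H as [b [? ?]]; eauto. Qed.

Lemma canon_in Q b : In b (qbody Q) -> In (ifact (freeze Q) b) (canon Q).
Proof. intros; unfold canon; apply in_map; auto. Qed.

Definition hom_via (th : nat -> term) (Q1 Q2 : query) : Prop :=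
  map (sterm th) (qhead Q1) = qhead Q2 /\ forall a, In a (qbody Q1) -> In (satom th a) (qbody Q2).

Lemma hom_via_hom th Q1 Q2 : hom_via th Q1 Q2 -> hom Q1 Q2.
Proof. intros H; exists th; exact H. Qed.

Lemma sterm_ext s s' t : (forall x, In x (tvars t) -> s x = s' x) -> sterm s t = sterm s' t.
Proof. destruct t; simpl; auto. Qed.

Lemma sterm_occ Q s s' t : (forall x, In x (qvars Q) -> s x = s' x) -> occ Q t -> sterm s t = sterm s' t.
Proof. intros H Ho. apply sterm_ext. intros x Hx. apply H. eapply occ_vars; eauto. Qed.

Lemma hom_via_ext Q1 Q2 th th' : (forall x, In x (qvars Q1) -> th x = th' x) -> hom_via th Q1 Q2 -> hom_via th' Q1 Q2.
Proof.
  intros E [H1 H2]. split.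
  - rewrite <- H1. apply map_ext_in. intros t Ht. symmetry. apply (sterm_occ Q1); auto. left; auto.
  - intros a Ha. replace (satom th' a) with (satom th a); auto. unfold satom; f_equal.
    apply map_ext_in. intros t Ht. apply (sterm_occ Q1); auto. right; eauto.
Qed.

Lemma hom_squery_eq s th Q1 Q3 : (forall v, sterm th (s v) = th v) -> hom_via th Q1 Q3 -> hom (squery s Q1) Q3.
Proof.
  intros E [H1 H2]. exists th. split.
  - simpl. rewrite <- H1, map_map. apply map_ext. intros t. rewrite sterm_sterm. apply sterm_ext; auto.
  - intros a Ha. simpl in Ha. apply in_map_iff in Ha. destruct Ha as [b [<- Hb]].
    rewrite satom_satom. replace (satom (fun v => sterm th (s v)) b) with (satom th b); auto.
    unfold satom; f_equal. apply map_ext. intros t; apply sterm_ext; auto.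
Qed.

Lemma hom_via_occ th Q1 Q2 t : hom_via th Q1 Q2 -> occ Q1 t -> occ Q2 (sterm th t).
Proof. intros [H1 H2]. apply hom_occ; auto. Qed.

Lemma step_tgd_data phi psi Q1 Q2 : chase_step (TGD phi psi) Q1 Q2 ->
  exists h g, tgd_data Q1 phi psi h g /\ Q2 = tgd_res Q1 psi g /\
    ~ (exists h', (forall x, In x (dvars phi) -> h' x = h x) /\ dhom h' (phi ++ psi) (qbody Q1)).
Proof.
  intros [h [Hh [Hn [g [H1 [H2 [H3 ->]]]]]]]. exists h, g. repeat split; auto.
Qed.

Lemma repl_eq th x w : sterm th (TVar x) = sterm th w -> forall v, sterm th (repl x w v) = th v.
Proof. intros E v. unfold repl. destruct (Nat.eqb_spec v x); subst; auto. Qed.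

Lemma extend_canon Sigma QS Q1 Q2 th :
  satisfies_all (canon QS) Sigma -> (forall d, In d Sigma -> wf_dep d) ->
  sigma_step Sigma Q1 Q2 -> hom_via th Q1 QS -> hom Q2 QS.
Proof.
  intros Hsat Hwf [d [Hd Hst]] Hth. pose proof (Hsat d Hd) as HD. pose proof (Hwf d Hd) as Hw.
  set (fz := freeze QS).
  destruct d as [phi psi|phi u1 u2].
  - apply step_tgd_data in Hst. destruct Hst as [h [g [Htd [-> _]]]].
    pose proof Htd as [Hh [G1 [G2 G3]]].
    destruct (HD (fun v => eval fz (sterm th (h v)))) as [h' [Ha Hb]].
    { intros a Ha. replace (dfact _ a) with (ifact fz (satom th (dinst h a))).
      apply canon_in. apply Hth. apply Hh; auto.
      rewrite satom_dinst, ifact_dinst. reflexivity. }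
    set (th2 := fun y => match invg phi psi g y with Some x => unfz (MQ QS) (h' x) | None => th y end).
    assert (E : forall x, In x (qvars Q1) -> th x = th2 x).
    { intros y Hy. unfold th2. rewrite (invg_old Q1 phi psi h g y); auto. }
    pose proof (hom_via_ext _ _ _ _ E Hth) as [K1 K2].
    exists th2. split; [exact K1|]. intros a Hin. simpl in Hin. apply in_app_or in Hin. destruct Hin as [Hin|Hin]; auto.
    apply in_map_iff in Hin. destruct Hin as [b [<- Hbp]].
    destruct (canon_inv QS _ (Hb b Hbp)) as [c [Hc Hce]].
    replace (satom th2 (dinst g b)) with c; auto.
    destruct c as [p args]. unfold ifact, dfact in Hce. simpl in Hce. injection Hce. intros Ea Ep.
    rewrite satom_dinst. unfold dinst. simpl. f_equal; auto.
    assert (Gd : forall t, In t args -> good (MQ QS) t).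
    { intros t Ht. apply occ_good. right. exists (mkAtom p args). simpl; auto. }
    transitivity (map (fun t => unfz (MQ QS) (eval fz t)) args).
    { rewrite <- (map_id args) at 1. apply map_ext_in. intros t Ht. symmetry. apply unfz_eval; auto. }
    rewrite <- (map_map (eval fz) (unfz (MQ QS))). unfold fz. rewrite Ea, map_map. apply map_ext_in. intros v Hv.
    assert (Hvp : In v (dvars psi)) by (eapply dargs_in; eauto).
    destruct (in_dec Nat.eq_dec v (dvars phi)) as [Hp|Hp].
    + rewrite Ha by auto. rewrite G1 by auto. unfold fz. rewrite unfz_eval.
      * symmetry. apply (sterm_occ Q1). intros; symmetry; auto. apply dhom_occ with phi; auto.
      * apply occ_good. eapply hom_via_occ; eauto. apply dhom_occ with phi; auto.
    + destruct (G2 v Hvp Hp) as [y [Hy _]]. rewrite Hy. simpl. unfold th2.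
      rewrite (invg_ex Q1 phi psi h g v y); auto.
  - destruct Hst as [h [Hh [Hne Hc]]]. destruct Hw as [W1 W2].
    assert (Eq : sterm th (h u1) = sterm th (h u2)).
    { apply (freeze_inj QS).
      - eapply hom_via_occ; eauto. apply dhom_occ with phi; auto.
      - eapply hom_via_occ; eauto. apply dhom_occ with phi; auto.
      - apply (HD (fun v => eval (freeze QS) (sterm th (h v)))).
        intros a Ha. replace (dfact _ a) with (ifact (freeze QS) (satom th (dinst h a))).
        apply canon_in. apply Hth. apply Hh; auto.
        rewrite satom_dinst, ifact_dinst. reflexivity. }
    destruct Hc as [[x [Hx ->]]|[x [Hx ->]]].
    + apply (hom_squery_eq _ th _ _); auto. apply repl_eq. rewrite <- Hx. auto.
    + apply (hom_squery_eq _ th _ _); auto. apply repl_eq. rewrite <- Hx. auto.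
Qed.

Lemma setchase_univ Sigma Q QS Q' :
  (forall d, In d Sigma -> wf_dep d) -> set_chase_result Sigma Q QS ->
  clos_refl_trans query (sigma_step Sigma) Q Q' -> hom Q' QS.
Proof.
  intros Hwf [Hrt Hs] H. apply clos_rt_rtn1 in H. induction H.
  - apply (rt_hom _ _ _ (sigma_step_hom Sigma)); auto.
  - destruct IHclos_refl_trans_n1 as [th Hth]. eapply extend_canon; eauto.
Qed.

Lemma sat_mem Q D D' t d : (forall f, In f D -> In f D') -> sat Q D t d -> sat Q D' t d.
Proof. intros H [H1 H2]; split; auto. Qed.

Lemma satisfies_mem D D' dp : (forall f, In f D <-> In f D') -> satisfies D dp -> satisfies D' dp.
Proof.
  intros H. destruct dp; simpl.
  - intros S hh Hp. destruct (S hh) as [h' [A B]]. intros a Ha; apply H; auto.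
    exists h'. split; auto. intros a Ha; apply H; auto.
  - intros S hh Hp. apply S. intros a Ha; apply H; auto.
Qed.

Lemma prod01 D g l : NoDup D ->
  fold_right Nat.mul 1 (map (fun a => count_occ fact_eq_dec D (ifact g a)) l) =
  if forallb (fun a => if in_dec fact_eq_dec (ifact g a) D then true else false) l then 1 else 0.
Proof.
  intros ND. induction l as [|a l IH]; simpl; auto. rewrite IH.
  destruct (in_dec fact_eq_dec (ifact g a) D) as [Hi|Hi].
  - rewrite (proj1 (NoDup_count_occ' fact_eq_dec D) ND _ Hi). simpl. lia.
  - rewrite (proj1 (count_occ_not_In fact_eq_dec D _) Hi). simpl. auto.
Qed.

Lemma mult_bag_nodup Q D t : NoDup D -> mult_bag Q D t = mult_bagset Q D t.
Proof.
  intros ND. unfold mult_bag, mult_bagset. f_equal. apply map_ext. intros g.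
  rewrite prod01 by auto. destruct (head_ok Q g t); simpl; auto.
Qed.

Lemma bag_ok_nodup SR D : NoDup D -> bag_ok SR D.
Proof.
  intros ND f _. destruct (in_dec fact_eq_dec f D) as [Hi|Hi].
  - rewrite (proj1 (NoDup_count_occ' fact_eq_dec D) ND _ Hi). auto.
  - rewrite (proj1 (count_occ_not_In fact_eq_dec D _) Hi). auto.
Qed.

Lemma b_uniq SR Sigma Q1 phi psi h g :
  tgd_data Q1 phi psi h g -> In (TGD phi psi) Sigma ->
  (forall D, bag_ok SR D -> satisfies_all D Sigma -> forall t, mult_bag Q1 D t = mult_bag (tgd_res Q1 psi g) D t) ->
  forall D t, satisfies_all D Sigma ->
  forall d1 d2, sat (tgd_res Q1 psi g) D t d1 -> sat (tgd_res Q1 psi g) D t d2 ->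
     agree (qvars Q1) d1 d2 -> agree (qvars (tgd_res Q1 psi g)) d1 d2.
Proof.
  intros Hd Hin Hs D t HD d1 d2 S1 S2 A.
  set (D0 := nodup fact_eq_dec D).
  assert (M : forall f, In f D <-> In f D0) by (intros; unfold D0; rewrite nodup_In; tauto).
  assert (HD0 : satisfies_all D0 Sigma) by (intros dp Hdp; apply (satisfies_mem D); auto).
  assert (ND : NoDup D0) by apply NoDup_nodup.
  apply (uniq_of_count Q1 phi psi h g D0 t); auto.
  - rewrite <- !mult_bagset_SatL, <- !mult_bag_nodup by auto. apply Hs; auto. apply bag_ok_nodup; auto.
  - apply (sat_mem _ D); auto. intros; apply M; auto.
  - apply (sat_mem _ D); auto. intros; apply M; auto.
Qed.

Lemma dhom_comp h phi Q1 Q3 th : dhom h phi (qbody Q1) -> hom_via th Q1 Q3 ->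
  dhom (fun v => sterm th (h v)) phi (qbody Q3).
Proof. intros Hh [_ H2] a Ha. rewrite <- satom_dinst. apply H2, Hh; auto. Qed.

Lemma dup_removal_back SR Q1 Q2 : dup_removal SR Q1 Q2 -> hom Q2 Q1.
Proof.
  intros [l1 [a [l2 [Hb [_ [_ ->]]]]]]. exists TVar. split.
  - simpl. rewrite <- (map_id (qhead Q1)) at 2. apply map_ext, sterm_id.
  - intros b Hb'. rewrite satom_id. simpl in Hb'. rewrite Hb. apply in_app_or in Hb'.
    apply in_or_app. destruct Hb'; [left|right; right]; auto.
Qed.

Lemma eval_via Q1 th d d' t : (forall v, In v (qvars Q1) -> d v = eval d' (th v)) -> occ Q1 t ->
  eval d t = eval d' (sterm th t).
Proof. intros H Ho. rewrite eval_sterm. apply eval_ext. intros x Hx. apply H. eapply occ_vars; eauto. Qed.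

Lemma list_max_lt l x : In x l -> x < S (list_max l).
Proof.
  intros H. assert (F : Forall (fun k => k <= list_max l) l) by (apply list_max_le; auto).
  rewrite Forall_forall in F. specialize (F x H). lia.
Qed.

Lemma extend_bs SR Sigma QS QBS Q1 Q2 th sg :
  (forall d, In d Sigma -> wf_dep d) -> satisfies_all (canon QS) Sigma ->
  hom_via sg QBS QS -> ~ (exists Q'', bs_sound_step Sigma QBS Q'') ->
  b_sound_step SR Sigma Q1 Q2 -> hom_via th Q1 QBS -> hom Q2 QBS.
Proof.
  intros Hwf Hcan Hsg Hmax [[[d [Hd Hst]]|Hdup] Hsound] Hth.
  2:{ eapply hom_trans. eapply dup_removal_back; eauto. exists th; auto. }
  pose proof (Hwf d Hd) as Hw.
  destruct d as [phi psi|phi u1 u2].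
  - apply step_tgd_data in Hst. destruct Hst as [h [g [Htd [-> _]]]].
    pose proof Htd as [Hh [G1 [G2 G3]]].
    set (h2 := fun v => sterm th (h v)).
    assert (Hh2 : dhom h2 phi (qbody QBS)) by (apply (dhom_comp h phi Q1); auto).
    destruct (classic (exists h', (forall x, In x (dvars phi) -> h' x = h2 x) /\ dhom h' (phi ++ psi) (qbody QBS)))
      as [[h' [Ha Hb]]|NE].
    + set (th2 := fun y => match invg phi psi g y with Some x => h' x | None => th y end).
      assert (E : forall x, In x (qvars Q1) -> th x = th2 x).
      { intros y Hy. unfold th2. rewrite (invg_old Q1 phi psi h g y); auto. }
      pose proof (hom_via_ext _ _ _ _ E Hth) as [K1 K2].
      exists th2. split; [exact K1|]. intros a Hin. simpl in Hin. apply in_app_or in Hin. destruct Hin as [Hin|Hin]; auto.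
      apply in_map_iff in Hin. destruct Hin as [b [<- Hbp]].
      replace (satom th2 (dinst g b)) with (dinst h' b). apply Hb, in_or_app; auto.
      rewrite satom_dinst. unfold dinst. f_equal. apply map_ext_in. intros v Hv.
      assert (Hvp : In v (dvars psi)) by (eapply dargs_in; eauto).
      destruct (in_dec Nat.eq_dec v (dvars phi)) as [Hp|Hp].
      * rewrite Ha by auto. rewrite G1 by auto. unfold h2. apply (sterm_occ Q1); auto. apply dhom_occ with phi; auto.
      * destruct (G2 v Hvp Hp) as [y [Hy _]]. rewrite Hy. simpl. unfold th2.
        rewrite (invg_ex Q1 phi psi h g v y); auto.
    + exfalso. apply Hmax.
      set (N := S (list_max (qvars QBS))).
      set (g2 := fun x => if in_dec Nat.eq_dec x (dvars phi) then h2 x else TVar (N + x)).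
      assert (Htd2 : tgd_data QBS phi psi h2 g2).
      { split; [auto|split; [|split]].
        - intros x Hx. unfold g2. destruct (in_dec Nat.eq_dec x (dvars phi)); [auto|contradiction].
        - intros x Hx Hn. exists (N + x). unfold g2. destruct (in_dec Nat.eq_dec x (dvars phi)); [contradiction|].
          split; auto. intros Hy. apply list_max_lt in Hy. unfold N in Hy. lia.
        - intros x y Hx Hnx Hy Hny. unfold g2.
          destruct (in_dec Nat.eq_dec x (dvars phi)); [contradiction|].
          destruct (in_dec Nat.eq_dec y (dvars phi)); [contradiction|]. intros E; injection E; lia. }
      pose proof Htd2 as [_ [G1' [G2' G3']]].
      exists (tgd_res QBS psi g2). split.
      { exists (TGD phi psi). split; auto. simpl. exists h2. split; auto. split; auto.
        exists g2. repeat split; auto. }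
      intros D HD t. apply (sound_of_uniq QBS phi psi h2 g2); auto.
      intros d1' d2' S1 S2 A12.
      set (dd := fun (d' : nat -> nat) v => match invg phi psi g v with Some x => eval d' (g2 x) | None => eval d' (th v) end).
      assert (Old : forall d' v, In v (qvars Q1) -> dd d' v = eval d' (th v)).
      { intros d' v Hv. unfold dd. rewrite (invg_old Q1 phi psi h g v); auto. }
      assert (SatQ2 : forall d', sat (tgd_res QBS psi g2) D t d' -> sat (tgd_res Q1 psi g) D t (dd d')).
      { intros d' [Sh Sb]. destruct Hth as [T1 T2]. split.
        - simpl. rewrite <- Sh. simpl. rewrite <- T1, map_map. apply map_ext_in. intros u Hu.
          apply (eval_via Q1); auto. left; auto.
        - simpl. intros a Hin. apply in_app_or in Hin. destruct Hin as [Hin|Hin].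
          + replace (ifact (dd d') a) with (ifact d' (satom th a)). apply Sb. simpl. apply in_or_app; auto.
            rewrite ifact_satom. unfold ifact; f_equal. apply map_ext_in. intros u Hu.
            symmetry. rewrite <- eval_sterm. apply (eval_via Q1); auto. right; eauto.
          + apply in_map_iff in Hin. destruct Hin as [b [<- Hbp]].
            replace (ifact (dd d') (dinst g b)) with (ifact d' (dinst g2 b)).
            apply Sb. simpl. apply in_or_app; right; apply in_map; auto.
            rewrite !ifact_dinst. unfold dfact; f_equal. apply map_ext_in. intros v Hv.
            assert (Hvp : In v (dvars psi)) by (eapply dargs_in; eauto).
            destruct (in_dec Nat.eq_dec v (dvars phi)) as [Hp|Hp].
            * rewrite G1, G1' by auto. unfold h2. symmetry. apply (eval_via Q1); auto. apply dhom_occ with phi; auto.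
            * destruct (G2 v Hvp Hp) as [z [Hz _]]. rewrite Hz. simpl. unfold dd.
              rewrite (invg_ex Q1 phi psi h g v z); auto. }
      assert (U2 := b_uniq SR Sigma Q1 phi psi h g Htd Hd Hsound D t HD (dd d1') (dd d2') (SatQ2 _ S1) (SatQ2 _ S2)).
      assert (A1 : agree (qvars Q1) (dd d1') (dd d2')).
      { intros v Hv. rewrite !Old by auto. apply eval_ext. intros x Hx. apply A12.
        eapply occ_vars; [|exact Hx]. change (occ QBS (sterm th (TVar v))). eapply hom_via_occ; eauto. apply qvars_occ; auto. }
      specialize (U2 A1).
      intros v Hv. destruct (tgd_vars_new QBS phi psi h2 g2 v Htd2 Hv) as [Hv'|[x [Hx [Hnx Hgx]]]]; auto.
      destruct (G2 x Hx Hnx) as [z [Hz _]].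
      assert (Hzq : In z (qvars (tgd_res Q1 psi g))) by (eapply tgd_vars_ex; eauto).
      specialize (U2 z Hzq). unfold dd in U2. rewrite (invg_ex Q1 phi psi h g x z) in U2 by auto.
      rewrite Hgx in U2. simpl in U2. exact U2.
  - destruct Hst as [h [Hh [Hne Hc]]]. destruct Hw as [W1 W2].
    set (h2 := fun v => sterm th (h v)).
    assert (Hh2 : dhom h2 phi (qbody QBS)) by (apply (dhom_comp h phi Q1); auto).
    assert (Eq : h2 u1 = h2 u2).
    { apply NNPP. intros NE.
      assert (Hcz : eval (freeze QS) (sterm sg (h2 u1)) = eval (freeze QS) (sterm sg (h2 u2))).
      { apply (Hcan (EGD phi u1 u2) Hd (fun v => eval (freeze QS) (sterm sg (h2 v)))).
        intros a Ha. replace (dfact _ a) with (ifact (freeze QS) (satom sg (dinst h2 a))).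
        apply canon_in. apply Hsg. apply Hh2; auto.
        rewrite satom_dinst, ifact_dinst. reflexivity. }
      assert (Egd : forall x u, u <> TVar x -> h2 u1 = TVar x /\ u = h2 u2 \/ h2 u2 = TVar x /\ u = h2 u1 ->
                 bs_sound_step Sigma QBS (squery (repl x u) QBS)).
      { intros x u Hux Hxu. split.
        - exists (EGD phi u1 u2). split; auto. exists h2. split; auto. split; auto.
          destruct Hxu as [[A B]|[A B]]; subst u; [left|right]; eauto.
        - intros D HD t. apply egd_sound; auto.
          + apply qvars_occ. destruct Hxu as [[A _]|[A _]]; rewrite <- A; apply dhom_occ with phi; auto.
          + intros w Hw. destruct Hxu as [[_ B]|[_ B]]; subst u; eapply occ_vars; eauto; apply dhom_occ with phi; auto.
          + intros dl Hs. pose proof (HD (EGD phi u1 u2) Hd (fun v => eval dl (h2 v))) as E. simpl in E.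
            assert (E' : eval dl (h2 u1) = eval dl (h2 u2)).
            { apply E. intros a Ha. rewrite <- ifact_dinst. apply Hs. apply Hh2; auto. }
            destruct Hxu as [[A B]|[A B]]; subst u; rewrite A in E'; simpl in E'; auto. }
      destruct (h2 u1) as [x1|c1] eqn:E1.
      - apply Hmax. exists (squery (repl x1 (h2 u2)) QBS). apply Egd. intros Hc'; apply NE; auto. left; auto.
      - destruct (h2 u2) as [x2|c2] eqn:E2.
        + apply Hmax. exists (squery (repl x2 (TCst c1)) QBS). apply Egd. discriminate. right; auto.
        + simpl in Hcz. apply NE. congruence. }
    destruct Hc as [[x [Hx ->]]|[x [Hx ->]]].
    + apply (hom_squery_eq _ th _ _); auto. apply repl_eq. rewrite <- Hx. exact Eq.
    + apply (hom_squery_eq _ th _ _); auto. apply repl_eq. rewrite <- Hx. symmetry; exact Eq.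
Qed.

Lemma rt_mono (R1 R2 : query -> query -> Prop) a b : (forall x y, R1 x y -> R2 x y) ->
  clos_refl_trans query R1 a b -> clos_refl_trans query R2 b b -> clos_refl_trans query R2 a b.
Proof. intros H Hr _. induction Hr; eauto using clos_refl_trans. Qed.

Theorem proposition6p2 (SR : nat -> bool) (Sigma : list dependency)
  (Q QS QBS QB : query) :
  safe Q ->
  (forall d, In d Sigma -> wf_dep d) ->
  regularized Sigma ->
  set_chase_result Sigma Q QS ->
  bs_chase_result Sigma Q QBS ->
  b_chase_result SR Sigma Q QB ->
  set_contained QS QBS /\ set_contained QBS QB /\ set_contained QB Q.
Proof.
  intros _ Hwf _ HS [Hbs Hbsmax] [Hb _].
  assert (Rbs : clos_refl_trans query (sigma_step Sigma) Q QBS).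
  { apply (rt_mono (bs_sound_step Sigma)); auto. intros x y [H _]; auto. apply rt_refl. }
  assert (Hsg : hom QBS QS) by (eapply setchase_univ; eauto).
  split; [|split].
  - apply hom_contained; auto.
  - apply hom_contained.
    assert (H0 : hom Q QBS) by (apply (rt_hom _ _ _ (sigma_step_hom Sigma)); auto).
    apply clos_rt_rtn1 in Hb. induction Hb as [|Q1 Q2 Hst Hr IH]; auto.
    destruct IH as [th Hth]. destruct Hsg as [sg Hsg'].
    eapply (extend_bs SR Sigma QS QBS Q1 Q2 th sg); eauto. apply HS.
  - apply hom_contained. apply (rt_hom (b_sound_step SR Sigma)); auto.
    intros A B [[H|H] _]. eapply sigma_step_hom; eauto. eapply dup_removal_hom; eauto.
Qed.
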